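(* Let $a$ be an element of a ring $K$ such that $z_0a^m+z_1a^{m-1}+\dots+z_{m-1}a=0$ for some positive integer $m$ and integers $z_0,\dots,z_{m-1}$ with $z_0>0$, and let $k=\gcd(z_0,z_1,\dots,z_{m-1})$. Suppose moreover that $d\,f(a)=0$ for some integer $d>1$ and some monic $f\in\mathbb{Z}[x]$ with $f(0)=0$. Then $k\,\varphi(a)=0$ for some monic $\varphi\in\mathbb{Z}[x]$ with $\varphi(0)=0$ and $\deg\varphi\le m$.
   Context: Rings are associative and not necessarily unital. *)

(* Defs.v *)
From HB Require Import structures.
From mathcomp Require Import all_boot all_order all_algebra.
Set Implicit Arguments. Unset Strict Implicit. Unset Printing Implicit Defensive.
Import Order.TTheory GRing.Theory Num.Theory.
Local Open Scope ring_scope.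

Definition nonunital_ring_axioms (V : zmodType) (mul : V -> V -> V) : Prop :=
  [/\ associative mul, left_distributive mul +%R & right_distributive mul +%R].

(* rpow mul a n = a^n for n >= 1 (a^1 = a, a^(n+1) = a * a^n). *)
Definition rpow (V : zmodType) (mul : V -> V -> V) (a : V) (n : nat) : V :=
  iter n.-1 (mul a) a.

(* Evaluation at a of an integer polynomial without constant term:
   sum_{i >= 1} p_i a^i (the constant coefficient is ignored; it is
   required to be 0 wherever this is used). *)
Definition eval0 (V : zmodType) (mul : V -> V -> V) (p : {poly int}) (a : V) : V :=
  \sum_(1 <= i < size p) (rpow mul a i) *~ p`_i.

(* Main.v *)
Require Import Defs.
From HB Require Import structures.
From mathcomp Require Import all_boot all_order all_algebra.
From mathcomp Require Import zify ring.
Import Order.TTheory GRing.Theory Num.Theory.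
Local Open Scope ring_scope.

Lemma dvdz_biggcd (m : nat) (z : nat -> int) (t : int) :
  (t %| \big[gcdz/0]_(i < m) z i)%Z = [forall i : 'I_m, (t %| z i)%Z].
Proof.
elim: m z => [|m IH] z.
  by rewrite big_ord0 dvdz0; apply/esym/forallP => -[].
rewrite big_ord_recl /=.
have -> : \big[gcdz/0]_(i < m) z (lift ord0 i) = \big[gcdz/0]_(i < m) z i.+1.
  by apply: eq_bigr => i _; rewrite lift0.
rewrite dvdz_gcd (IH (fun i => z i.+1)).
apply/andP/forallP => [[H2 /forallP H1] i | H].
  case: (unliftP ord0 i) => [j ->|->] //.
  by have := H1 j; rewrite lift0.
split; first exact: (H ord0).
by apply/forallP => i; have := H (lift ord0 i); rewrite lift0.
Qed.

Lemma biggcd_ge0 (m : nat) (z : nat -> int) : 0 <= \big[gcdz/0]_(i < m) z i.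
Proof. by apply: (big_rec (fun x : int => 0 <= x)) => // i x _ _; rewrite /gcdz. Qed.

Theorem lemma10 (V : zmodType) (mul : V -> V -> V)
  (hring : nonunital_ring_axioms mul) (a : V)
  (m : nat) (hm : (0 < m)%N) (z : nat -> int) (hz0 : 0 < z 0%N)
  (hz : \sum_(i < m) (rpow mul a (m - i)) *~ z i = 0)
  (d : int) (hd : 1 < d) (f : {poly int}) (hfmon : f \is monic)
  (hf0 : f`_0 = 0) (hdf : (eval0 mul f a) *~ d = 0) :
  let k := \big[gcdz/0]_(i < m) z i in
  exists phi : {poly int},
    [/\ phi \is monic, phi`_0 = 0, (size phi <= m.+1)%N
      & (eval0 mul phi a) *~ k = 0].
Proof.
move=> k.
case: hring => hA hDl hDr.
pose L := mul a.
have LD : forall x y, L (x + y) = L x + L y by move=> x y; exact: hDr.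
have L0 : L 0 = 0.
  by apply: (addrI (L 0)); rewrite -LD !addr0.
have LN : forall x, L (- x) = - L x.
  by move=> x; apply: (addrI (L x)); rewrite -LD !subrr L0.
have LMn : forall x n, L (x *+ n) = L x *+ n.
  move=> x; elim=> [|n IH]; first by rewrite !mulr0n L0.
  by rewrite !mulrS LD IH.
have LMz : forall x n, L (x *~ n) = L x *~ n.
  move=> x [] n; first exact: LMn.
  by rewrite !NegzE !mulrNz LN LMn.
have LS : forall (I : Type) (r : seq I) (P : pred I) (F : I -> V),
    L (\sum_(i <- r | P i) F i) = \sum_(i <- r | P i) L (F i).
  by move=> I r P F; apply: (big_morph L LD L0).
pose b j := rpow mul a j *~ k.
have Lb : forall j, (0 < j)%N -> L (b j) = b j.+1.
  by move=> [|j] // _; rewrite /b LMz.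
have b0 : b 0%N = b 1%N by [].
have hkz : forall i, (i < m)%N -> (k %| z i)%Z.
  move=> i hi; have := dvdz_biggcd m z k; rewrite dvdzz => /esym/forallP.
  by move/(_ (Ordinal hi)).
have kge0 : 0 <= k by exact: biggcd_ge0.
have kgt0 : 0 < k.
  rewrite lt_def kge0 andbT; apply/negP => /eqP k0.
  have := hkz 0%N hm; rewrite k0 dvd0z => /eqP z00.
  by rewrite z00 ltxx in hz0.
pose z' i := (z i %/ k)%Z.
have hzz : forall i, (i < m)%N -> z i = z' i * k.
  by move=> i hi; rewrite /z' divzK // hkz.
pose c := z' 0%N.
have cgt0 : 0 < c.
  by move: hz0; rewrite (hzz 0%N hm) pmulr_lgt0.
have hR : forall r, \sum_(i < m) b (m - i + r)%N *~ z' i = 0.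
  elim=> [|r IH].
    apply: (etrans _ hz); apply: eq_bigr => i _.
    by rewrite addn0 /b (hzz i (ltn_ord i)) mulrzA mulrzAC.
  have := congr1 L IH; rewrite L0 LS => H; apply: (etrans _ H).
  apply: eq_bigr => i _; rewrite LMz Lb ?addnS //.
  by have := ltn_ord i; lia.
have hF : forall r, \sum_(1 <= i < size f) b (i + r)%N *~ (f`_i * d) = 0.
  elim=> [|r IH].
    have := congr1 (fun x => x *~ k) hdf; rewrite /= mul0rz /eval0 mulrz_suml mulrz_suml => H.
    apply: (etrans _ H).
    apply: eq_bigr => i _.
    by rewrite addn0 /b -!mulrzA; congr (_ *~ _); ring.
  have := congr1 L IH; rewrite L0 LS => H; apply: (etrans _ H).
  apply: eq_big_nat => i hi; rewrite LMz Lb ?addnS //.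
  by lia.
pose N x := exists w : nat -> int, x = \sum_(1 <= i < m) b i *~ w i.
have N0 : N 0 by exists (fun _ => 0); rewrite big1 // => i _; rewrite mulr0z.
have ND : forall x y, N x -> N y -> N (x + y).
  move=> x y [w1 ->] [w2 ->]; exists (fun i => w1 i + w2 i).
  by rewrite -big_split; apply: eq_bigr => i _; rewrite mulrzDr.
have NZ : forall x n, N x -> N (x *~ n).
  move=> x n [w ->]; exists (fun i => w i * n).
  by rewrite mulrz_suml; apply: eq_bigr => i _; rewrite mulrzA.
have Nb : forall j, (1 <= j < m)%N -> N (b j).
  move=> j hj; exists (fun i => (i == j)%:R).
  rewrite (bigD1_seq j) ?mem_index_iota ?iota_uniq //= eqxx mulr1z big1 ?addr0 //.
  by move=> i /negbTE ->; rewrite mulr0z.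
have Nsum : forall (I : Type) (r : seq I) (P : pred I) (F : I -> V),
    (forall i, P i -> N (F i)) -> N (\sum_(i <- r | P i) F i).
  by move=> I r P F H; apply: big_ind.
pose G x := exists s : seq (nat * int), x = \sum_(q <- s) b q.1 *~ q.2.
have G0 : G 0 by exists [::]; rewrite big_nil.
have GD : forall x y, G x -> G y -> G (x + y).
  by move=> x y [s1 ->] [s2 ->]; exists (s1 ++ s2); rewrite big_cat.
have GZ : forall x n, G x -> G (x *~ n).
  move=> x n [s ->]; exists (map (fun q => (q.1, q.2 * n)) s).
  by rewrite big_map mulrz_suml; apply: eq_bigr => i _; rewrite mulrzA.
have Gb : forall j, G (b j) by move=> j; exists [:: (j, 1)]; rewrite big_seq1 mulr1z.
pose NE (E : int) x := exists y w, [/\ N y, G w & x = y + w *~ E].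
have NED : forall E x y, NE E x -> NE E y -> NE E (x + y).
  move=> E x y [y1 [w1 [h1 h2 ->]]] [y2 [w2 [h3 h4 ->]]].
  exists (y1 + y2), (w1 + w2); split; [exact: (ND)|exact: (GD)|].
  by rewrite mulrzDl addrACA.
have NEZ : forall E x n, NE E x -> NE E (x *~ n).
  move=> E x n [y1 [w1 [h1 h2 ->]]]; exists (y1 *~ n), (w1 *~ n); split.
  - exact: (NZ).
  - exact: (GZ).
  by rewrite mulrzDl mulrzAC.
have NEN : forall E x, N x -> NE E x.
  by move=> E x hx; exists x, 0; split => //; rewrite mul0rz addr0.
have NEG : forall E x, G x -> NE E (x *~ E).
  by move=> E x hx; exists 0, x; split => //; rewrite add0r.
have NEsum : forall E (I : Type) (r : seq I) (P : pred I) (F : I -> V),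
    (forall i, P i -> NE E (F i)) -> NE E (\sum_(i <- r | P i) F i).
  by move=> E I r P F H; apply: (big_ind (NE E)) => //; [exact: (NEN E 0 N0) | exact: (NED)].
have NN : forall x, N x -> N (- x) by move=> x hx; rewrite -mulrN1z; exact: (NZ).
have FC : forall j, (0 < j)%N -> N (b j *~ c ^+ j).
  elim/ltn_ind => j IH hj.
  case: (ltnP j m) => hjm.
    by apply: (NZ); apply: (Nb); rewrite hj hjm.
  have := hR (j - m)%N.
  rewrite (bigD1 (Ordinal hm)) //= subn0 (subnKC hjm).
  move/eqP; rewrite addr_eq0 => /eqP hbj.
  rewrite (_ : c ^+ j = c * c ^+ j.-1); last by rewrite -exprS prednK.
  rewrite mulrzA hbj mulNrz; apply: (NN); rewrite mulrz_suml; apply: (Nsum) => i hi.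
  have hi0 : (0 < i)%N.
    by rewrite lt0n; apply: contra hi => /eqP h; apply/eqP/val_inj.
  have hi1 := ltn_ord i.
  rewrite (_ : j.-1 = (m - i + (j - m)) + i.-1)%N; last by lia.
  rewrite exprD (_ : b (m - i + (j - m))%N *~ z' i *~ (c ^+ (m - i + (j - m)) * c ^+ i.-1)
     = b (m - i + (j - m))%N *~ c ^+ (m - i + (j - m)) *~ (z' i * c ^+ i.-1)).
    by apply: (NZ); apply: IH; lia.
  by rewrite -!mulrzA; congr (_ *~ _); ring.
pose n := (size f).-1.
have hlead : lead_coef f = 1 by exact: monicP.
have sf : size f = n.+1.
  rewrite /n prednK // lt0n size_poly_eq0; apply/eqP => f0.
  by rewrite f0 lead_coef0 in hlead.
have hfn : f`_n = 1 by rewrite -hlead lead_coefE sf.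
have n0 : (0 < n)%N.
  rewrite lt0n; apply/eqP => n0; move: hfn; rewrite n0 hf0.
  by move/eqP; rewrite eq_sym oner_eq0.
have FB : forall j, (0 < j)%N -> N (b j *~ (d * c ^+ n)).
  elim/ltn_ind => j IH hj.
  case: (ltnP j n) => hjn.
    rewrite (_ : d * c ^+ n = c ^+ j * (d * c ^+ (n - j))); last first.
      by rewrite mulrCA -exprD subnKC // ltnW.
    by rewrite mulrzA; apply: (NZ); exact: (FC).
  have := hF (j - n)%N.
  rewrite sf big_nat_recr //= (subnKC hjn) hfn mul1r.
  move/eqP; rewrite addrC addr_eq0 => /eqP hbj.
  rewrite mulrzA hbj mulNrz; apply: (NN); rewrite mulrz_suml big_seq.
  apply: (Nsum) => i; rewrite mem_index_iota => /andP [hi1 hi2].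
  rewrite (_ : b (i + (j - n))%N *~ (f`_i * d) *~ c ^+ n
     = b (i + (j - n))%N *~ (d * c ^+ n) *~ f`_i).
    by apply: (NZ); apply: IH; lia.
  by rewrite -!mulrzA; congr (_ *~ _); ring.
have NENeg : forall E x, NE E x -> NE E (- x).
  by move=> E x hx; rewrite -mulrN1z; exact: (NEZ).
have FAp : forall p : nat, prime p -> forall j, NE p%:Z (b j).
  move=> p pp.
  have hex : exists i, (i < m)%N && ~~ (p%:Z %| z' i)%Z.
    case: (boolP [exists i : 'I_m, ~~ (p%:Z %| z' i)%Z]) => [/existsP [i hi] | ].
      by exists i; rewrite ltn_ord hi.
    rewrite negb_exists => /forallP hall; exfalso.
    have : (k * p%:Z %| k)%Z.
      suff H : [forall i : 'I_m, (k * p%:Z %| z i)%Z].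
        by rewrite -dvdz_biggcd in H; exact: (H).
      apply/forallP => i.
      rewrite (hzz i (ltn_ord i)) [z' i * k]mulrC dvdz_mul2l ?gt_eqF //.
      by have := hall i; rewrite negbK.
    rewrite -[X in (_ %| X)%Z]mulr1 dvdz_mul2l ?gt_eqF // dvdzE /= dvdn1 => /eqP p1.
    by rewrite p1 in pp.
  case: (ex_minnP hex) => i0 /andP [hi0m hi0] hmin.
  have hlt : forall i, (i < i0)%N -> (i < m)%N -> (p%:Z %| z' i)%Z.
    move=> i h1 h2; apply/negPn/negP => h.
    by have := hmin i; rewrite h2 h /= => /(_ isT); rewrite leqNgt h1.
  case: (Bezoutz (z' i0) p%:Z) => u [v huv].
  have hg : gcdz (z' i0) p%:Z = 1.
    move: hi0; rewrite dvdzE /= -prime_coprime // /coprime => /eqP h.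
    by rewrite /gcdz /= gcdnC h.
  rewrite hg in huv.
  suff H : forall j, (0 < j)%N -> NE p%:Z (b j).
    by case => [|j]; [rewrite b0; apply: (H) | apply: (H)].
  elim/ltn_ind => j IH hj.
  case: (ltnP j (m - i0)) => hjm.
    by apply: (NEN); apply: (Nb); lia.
  have := hR (j - (m - i0))%N.
  rewrite (bigD1 (Ordinal hi0m)) //= (_ : (m - i0 + (j - (m - i0)))%N = j); last by lia.
  move/eqP; rewrite addr_eq0 => /eqP hbj.
  rewrite -[b j]mulr1z -huv mulrzDr [u * _]mulrC (mulrzA (b j) (z' i0)) hbj.
  apply: (NED); last by rewrite mulrzA; apply: (NEG); apply: (GZ); apply: (Gb).
  apply: (NEZ); apply: (NENeg); apply: (NEsum) => i hi.
  have hi1 := ltn_ord i.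
  case: (ltngtP i i0) => hii0.
  - rewrite -(divzK (hlt i hii0 hi1)) mulrzA.
    by apply: (NEG); apply: (GZ); apply: (Gb).
  - by apply: (NEZ); apply: IH; lia.
  - by exfalso; move: hi; rewrite eqE /= hii0 eqxx.
have FAE : forall E : nat, (0 < E)%N -> forall j, NE E%:Z (b j).
  elim/ltn_ind => E IH hE j.
  case: (ltngtP E 1) => hE1.
  - by exfalso; lia.
  - pose p := pdiv E.
    have pp : prime p by exact: pdiv_prime.
    have [E' hE'] : exists E', E = (p * E')%N.
      by exists (E %/ p)%N; rewrite mulnC divnK // pdiv_dvd.
    have hE'0 : (0 < E')%N by move: hE; rewrite hE' muln_gt0 => /andP [].
    have hlt : (E' < E)%N by rewrite hE' ltn_Pmull // prime_gt1.
    case: (IH E' hlt hE'0 j) => y [w [hy [s hs] ->]].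
    have hw : NE p%:Z w.
      by rewrite hs; apply: (NEsum) => q _; apply: (NEZ); apply: (FAp).
    case: hw => y2 [w2 [hy2 hw2 ->]].
    exists (y + y2 *~ E'), w2; split => //.
      by apply: (ND) => //; apply: (NZ).
    by rewrite hE' PoszM mulrzDl mulrzA addrA.
  - exists 0, (b j); split; [exact: N0 | exact: (Gb j) | ].
    by rewrite hE1 add0r mulr1z.
pose E := d * c ^+ n.
have Egt0 : 0 < E by rewrite pmulr_rgt0 ?exprn_gt0 // (lt_trans ltr01 hd).
have hEn : (`|E|%N)%:Z = E by rewrite gez0_abs // ltW.
have FB' : forall j, N (b j *~ E).
  by case => [|j]; [rewrite b0|]; apply: (FB).
have := FAE `|E|%N _ m; rewrite hEn absz_gt0 gt_eqF // => /(_ isT).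
case=> y [w [hy [s hs] hbm]].
have hbmN : N (b m).
  rewrite hbm; apply: (ND) => //; rewrite hs mulrz_suml; apply: (Nsum) => q _.
  by rewrite mulrzAC; apply: (NZ).
case: hbmN => w' hw.
pose phi := \poly_(i < m.+1) (if i == m then 1 else if i == 0%N then 0 else - w' i).
have hsz : size phi = m.+1 by rewrite size_poly_eq //= eqxx oner_eq0.
exists phi; split.
- by rewrite monicE /lead_coef hsz coef_poly ltnSn eqxx.
- rewrite coef_poly /= (_ : (0 == m)%N = false) //.
  by rewrite eq_sym; apply/negbTE; rewrite -lt0n.
- by rewrite hsz.
rewrite /eval0 hsz mulrz_suml big_nat_recr //= coef_poly ltnSn eqxx mulr1z.
rewrite (eq_big_nat _ _ (F2 := fun i => - (b i *~ w' i))).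
  by rewrite sumrN -/(b m) hw addNr.
move=> i /andP [h1 h2]; rewrite coef_poly ltnS (ltnW h2) (ltn_eqF h2) (gtn_eqF h1).
by rewrite mulrNz mulNrz mulrzAC.
Qed.
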